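(* Let $(X,d)$ be a geodesic metric space such that the kernel $\exp(-\lambda\, d^2(x,y))$ is positive definite on $X$ for all $\lambda>0$. Then $X$ is contractible, and hence simply connected.
   Context: A geodesic metric space is a metric space in which any two points $x,y$ are joined by a path $\gamma\colon[0,L]\to X$ with $\gamma(0)=x$, $\gamma(L)=y$ and $d(\gamma(t),\gamma(t'))=|t-t'|$ for all $t,t'$. A positive definite kernel on $X$ (with its metric topology) is a continuous $k\colon X\times X\to\mathbb{R}$ with $\sum_{i,j}c_ic_jk(x_i,x_j)\ge0$ for all $n$, $x_1,\dots,x_n\in X$, $c_1,\dots,c_n\in\mathbb{R}$. *)

(* Defs.v *)
From mathcomp Require Import all_boot all_order all_algebra.
From mathcomp Require Import all_classical all_reals.
From mathcomp.analysis Require Import sequences exp.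
Set Implicit Arguments. Unset Strict Implicit. Unset Printing Implicit Defensive.
Import Order.TTheory GRing.Theory Num.Theory.
Local Open Scope ring_scope.

Section Defs.
Variables (R : realType) (X : Type).

Definition is_metric (d : X -> X -> R) : Prop :=
  (forall x y, 0 <= d x y) /\
  (forall x y, d x y = 0 <-> x = y) /\
  (forall x y, d x y = d y x) /\
  (forall x y z, d x z <= d x y + d y z).

Definition geodesic (d : X -> X -> R) : Prop :=
  forall x y, exists gamma : R -> X,
    gamma 0 = x /\ gamma (d x y) = y /\
    forall t t', 0 <= t <= d x y -> 0 <= t' <= d x y ->
      d (gamma t) (gamma t') = `|t - t'|.

Definition kernel_continuous (d : X -> X -> R) (k : X -> X -> R) : Prop :=
  forall x y e, 0 < e -> exists2 delta, 0 < delta &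
    forall x' y', d x x' < delta -> d y y' < delta -> `|k x y - k x' y'| < e.

Definition pos_def_kernel (d : X -> X -> R) (k : X -> X -> R) : Prop :=
  kernel_continuous d k /\
  forall (n : nat) (xs : 'I_n -> X) (c : 'I_n -> R),
    0 <= \sum_(i < n) \sum_(j < n) c i * c j * k (xs i) (xs j).

Definition contractible (d : X -> X -> R) : Prop :=
  exists (x0 : X) (H : X -> R -> X),
    (forall x t, 0 <= t <= 1 -> forall e, 0 < e -> exists2 delta, 0 < delta &
       forall y s, 0 <= s <= 1 -> d x y < delta -> `|t - s| < delta ->
         d (H x t) (H y s) < e) /\
    (forall x, H x 0 = x) /\ (forall x, H x 1 = x0).

Definition path_continuous (d : X -> X -> R) (g : R -> X) : Prop :=
  forall t, 0 <= t <= 1 -> forall e, 0 < e -> exists2 delta, 0 < delta &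
    forall s, 0 <= s <= 1 -> `|t - s| < delta -> d (g t) (g s) < e.

Definition simply_connected (d : X -> X -> R) : Prop :=
  (forall x y, exists g : R -> X, path_continuous d g /\ g 0 = x /\ g 1 = y) /\
  (forall g : R -> X, path_continuous d g -> g 0 = g 1 ->
     exists F : R -> R -> X,
       (forall s t, 0 <= s <= 1 -> 0 <= t <= 1 -> forall e, 0 < e ->
          exists2 delta, 0 < delta &
          forall s' t', 0 <= s' <= 1 -> 0 <= t' <= 1 ->
            `|s - s'| < delta -> `|t - t'| < delta -> d (F s t) (F s' t') < e) /\
       (forall s, F s 0 = g s) /\ (forall s, F s 1 = g 0) /\
       (forall t, F 0 t = g 0) /\ (forall t, F 1 t = g 0)).

End Defs.

(* Main.v *)
Require Import Defs.
From mathcomp Require Import all_boot all_order all_algebra.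
From mathcomp Require Import all_classical all_reals.
From mathcomp.analysis Require Import sequences exp.
From mathcomp Require Import ring lra.
Import Order.TTheory GRing.Theory Num.Theory.
Local Open Scope ring_scope.

Lemma exp_bounds {R : realType} (x : R) : 0 <= x ->
  0 <= expR (- x) + x - 1 <= x ^+ 2.
Proof.
move=> x0; have h1 := expR_ge1Dx (- x).
have h2 := expR_ge1Dx x. have h3 := expR_gt0 x.
have h4 : expR (- x) * expR x = 1 by rewrite expRN mulVf // gt_eqF.
have h5 := expR_gt0 (- x).
apply/andP; split; first lra.
have h6 : expR (- x) * (1 + x) <= 1.
  by rewrite -h4; apply: ler_wpM2l; lra.
have h7 : 1 <= (1 - x + x^+2) * (1 + x).
  have -> : (1 - x + x^+2) * (1 + x) = 1 + x^+3 by ring.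
  have : 0 <= x ^+ 3 by apply: exprn_ge0. lra.
have h8 : expR (- x) * (1 + x) <= (1 - x + x^+2) * (1 + x) by lra.
rewrite ler_pM2r in h8; last lra.
lra.
Qed.

Lemma cnd (R : realType) (X : Type) (d : X -> X -> R)
  (hpd : forall lambda : R, 0 < lambda ->
     pos_def_kernel d (fun x y => expR (- (lambda * d x y ^+ 2))))
  n (p : 'I_n -> X) (c : 'I_n -> R) : \sum_(i < n) c i = 0 ->
  \sum_(i < n) \sum_(j < n) c i * c j * d (p i) (p j) ^+ 2 <= 0.
Proof.
move=> hc.
set S := \sum_(i < n) \sum_(j < n) c i * c j * d (p i) (p j) ^+ 2.
set K := \sum_(i < n) \sum_(j < n) `|c i * c j| * (d (p i) (p j) ^+ 2) ^+ 2.
have K0 : 0 <= K.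
  by apply: sumr_ge0 => i _; apply: sumr_ge0 => j _; apply: mulr_ge0; [exact: normr_ge0| exact: sqr_ge0].
have hcc : \sum_(i < n) \sum_(j < n) c i * c j = 0.
  rewrite (eq_bigr (fun i => c i * \sum_(j < n) c j)); last first.
    by move=> i _; rewrite mulr_sumr.
  by rewrite hc; apply: big1 => i _; rewrite mulr0.
have key : forall l : R, 0 < l -> l * S <= l ^+ 2 * K.
  move=> l l0; have [_ hT] := hpd l l0; have := hT n p c.
  move=> T0.
  set T := \sum_(i < n) \sum_(j < n) _ in T0.
  have E : l * S + T = \sum_(i < n) \sum_(j < n)
      c i * c j * (expR (- (l * d (p i) (p j) ^+ 2)) + l * d (p i) (p j) ^+ 2 - 1)
      + \sum_(i < n) \sum_(j < n) c i * c j.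
    rewrite /S /T mulr_sumr -!big_split /=; apply: eq_bigr => i _.
    rewrite mulr_sumr -!big_split /=; apply: eq_bigr => j _; ring.
  have B : \sum_(i < n) \sum_(j < n)
      c i * c j * (expR (- (l * d (p i) (p j) ^+ 2)) + l * d (p i) (p j) ^+ 2 - 1)
      <= l ^+ 2 * K.
    rewrite /K mulr_sumr; apply: ler_sum => i _; rewrite mulr_sumr.
    apply: ler_sum => j _.
    have D0 : 0 <= l * d (p i) (p j) ^+ 2 by apply: mulr_ge0; [lra|apply: sqr_ge0].
    have /andP [r0 r1] := exp_bounds _ D0.
    have n1 := ler_norm (c i * c j). have n0 := normr_ge0 (c i * c j).
    have -> : l ^+ 2 * (`|c i * c j| * (d (p i) (p j) ^+ 2) ^+ 2)
      = `|c i * c j| * (l * d (p i) (p j) ^+ 2) ^+ 2 by ring.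
    set r := (expR _ + _ - _) in r0 r1 *.
    set q := (l * _) ^+ 2 in r1 *.
    nra.
  rewrite hcc addr0 in E; lra.
rewrite leNgt; apply/negP => S0.
have l0 : 0 < S / (K + 1) by apply: divr_gt0; lra.
have := key _ l0.
have hl : S / (K + 1) * (K + 1) = S by rewrite mulfVK // gt_eqF //; lra.
set l := S / (K + 1) in l0 hl *.
move=> h.
have h' : S <= l * K.
  rewrite expr2 -mulrA in h. by rewrite -(ler_pM2l l0).
nra.
Qed.

Definition Q {R : realType} (D01 D02 D03 D04 D12 D13 D14 D23 D24 D34 c0 c1 c2 c3 c4 : R) :=
  2 * (c0*c1*D01 + c0*c2*D02 + c0*c3*D03 + c0*c4*D04 + c1*c2*D12 + c1*c3*D13
   + c1*c4*D14 + c2*c3*D23 + c2*c4*D24 + c3*c4*D34).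

Lemma cnd5 (R : realType) (X : Type) (d : X -> X -> R) (hd : is_metric d)
  (hpd : forall lambda : R, 0 < lambda ->
     pos_def_kernel d (fun x y => expR (- (lambda * d x y ^+ 2))))
  (p0 p1 p2 p3 p4 : X) (c0 c1 c2 c3 c4 : R) :
  c0 + c1 + c2 + c3 + c4 = 0 ->
  Q (d p0 p1 ^+ 2) (d p0 p2 ^+ 2) (d p0 p3 ^+ 2) (d p0 p4 ^+ 2) (d p1 p2 ^+ 2)
    (d p1 p3 ^+ 2) (d p1 p4 ^+ 2) (d p2 p3 ^+ 2) (d p2 p4 ^+ 2) (d p3 p4 ^+ 2)
    c0 c1 c2 c3 c4 <= 0.
Proof.
move=> hc.
have [_ [hz [hs _]]] := hd.
have dd : forall x, d x x = 0 by move=> x; apply/hz.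
have := @cnd R X d hpd 5 (fun i => nth p0 [:: p0; p1; p2; p3; p4] i)
  (fun i => nth 0 [:: c0; c1; c2; c3; c4] i).
rewrite !big_ord_recl !big_ord0 /=.
move=> h; have {}h := h ltac:(lra).
rewrite /Q; move: h.
rewrite !dd (hs p1 p0) (hs p2 p0) (hs p3 p0) (hs p4 p0) (hs p2 p1) (hs p3 p1)
  (hs p4 p1) (hs p3 p2) (hs p4 p2) (hs p4 p3).
move=> h; apply: le_trans h; rewrite le_eqVlt; apply/orP; left; apply/eqP; ring.
Qed.

Lemma lin0 {R : realType} (A B : R) : (forall l : R, l * A + l ^+ 2 * B <= 0) -> A = 0.
Proof.
move=> h; set k := `|B| + 1.
have k0 : 0 < k by rewrite /k; have := normr_ge0 B; lra.
have := h (A / k).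
have hk : A / k * k = A by rewrite mulfVK // gt_eqF.
set l := A / k in hk *.
move=> hl.
have nB := ler_norm B. have nB' : - B <= `|B| by rewrite -normrN ler_norm.
have e1 : l * A + l^+2 * B = l^+2 * (k + B).
  by rewrite -hk; ring.
have e2 : 1 <= k + B by rewrite /k; lra.
have l2 : l ^+ 2 <= 0.
  have : l ^+2 * 1 <= l^+2 * (k + B) by apply: ler_wpM2l; [exact: sqr_ge0|].
  lra.
have : l = 0 by apply/eqP; rewrite -sqrf_eq0 eq_le l2 sqr_ge0.
by move=> l0; rewrite -hk l0 mul0r.
Qed.

Lemma core (R : realType) (D01 D03 D12 D23 t a b : R) :
 (forall c0 c1 c2 c3 c4, c0 + c1 + c2 + c3 + c4 = 0 ->
   Q D01 ((t*a)^+2) D03 (((1-t)*a)^+2) D12 ((t*b)^+2) (((1-t)*b)^+2) D23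
     (a^+2) (b^+2) c0 c1 c2 c3 c4 <= 0) ->
 D01 = (1-t)^+2 * D23.
Proof.
move=> hq.
pose q := Q D01 ((t*a)^+2) D03 (((1-t)*a)^+2) D12 ((t*b)^+2) (((1-t)*b)^+2) D23
     (a^+2) (b^+2).
pose P1 := q 1 (-1) 0 0 0 - q 1 0 (-(1-t)) 0 (-t) - q 0 (-1) (1-t) 0 t.
pose P2 := q 0 1 (1-t) (-(1-t) - (1-t)) (-t) - q 0 1 0 (-(1-t)) (-t) - q 0 0 (1-t) (-(1-t)) 0.
have h1 : P1 = 0.
  apply: (@lin0 _ _ (q 0 (-1) (1-t) 0 t)) => l.
  have := hq 1 (l * -1) (-(1-t) + l*(1-t)) 0 (-t + l*t) ltac:(ring).
  suff -> : Q D01 ((t*a)^+2) D03 (((1-t)*a)^+2) D12 ((t*b)^+2) (((1-t)*b)^+2) D23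
     (a^+2) (b^+2) 1 (l * -1) (-(1-t) + l*(1-t)) 0 (-t + l*t)
     = l * P1 + l ^+ 2 * q 0 (-1) (1-t) 0 t by [].
  by rewrite /P1 /q /Q; ring.
have h2 : P2 = 0.
  apply: (@lin0 _ _ (q 0 0 (1-t) (-(1-t)) 0)) => l.
  have := hq 0 1 (l*(1-t)) (-(1-t) + l * -(1-t)) (-t) ltac:(ring).
  suff -> : Q D01 ((t*a)^+2) D03 (((1-t)*a)^+2) D12 ((t*b)^+2) (((1-t)*b)^+2) D23
     (a^+2) (b^+2) 0 1 (l*(1-t)) (-(1-t) + l * -(1-t)) (-t)
     = l * P2 + l ^+ 2 * q 0 0 (1-t) (-(1-t)) 0 by [].
  by rewrite /P2 /q /Q; ring.
have e : 2 * (D01 - (1-t)^+2 * D23) = P2 - P1 by rewrite /P1 /P2 /q /Q; ring.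
rewrite h1 h2 subrr in e.
have : D01 - (1 - t) ^+ 2 * D23 = 0.
  by move/eqP: e; rewrite mulf_eq0 pnatr_eq0 /= => /eqP.
by move/eqP; rewrite subr_eq0 => /eqP.
Qed.

Section Geo.
Variables (R : realType) (X : Type) (d : X -> X -> R).
Hypothesis hd : is_metric d.
Hypothesis hpd : forall lambda : R, 0 < lambda ->
     pos_def_kernel d (fun x y => expR (- (lambda * d x y ^+ 2))).
Variable G : X * X -> R -> X.
Hypothesis hG : forall p : X * X, G p 0 = p.1 /\ G p (d p.1 p.2) = p.2 /\
    forall t t', 0 <= t <= d p.1 p.2 -> 0 <= t' <= d p.1 p.2 ->
      d (G p t) (G p t') = `|t - t'|.

Definition Hb (b x : X) (t : R) := G (x, b) (t * d x b).

Lemma d0 x y : 0 <= d x y. Proof. by case: hd. Qed.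
Lemma dsym x y : d x y = d y x. Proof. by case: hd => _ [_ []]. Qed.
Lemma dtri x y z : d x z <= d x y + d y z. Proof. by case: hd => _ [_ [_]]. Qed.
Lemma dxx x : d x x = 0. Proof. by case: hd => _ [h _]; apply/h. Qed.

Lemma in01 (t D : R) : 0 <= t <= 1 -> 0 <= D -> 0 <= t * D <= D.
Proof. by move=> /andP [t0 t1] D0; apply/andP; split; nra. Qed.

Lemma Hb0 b x : Hb b x 0 = x.
Proof. by rewrite /Hb mul0r; case: (hG (x, b)). Qed.
Lemma Hb1 b x : Hb b x 1 = b.
Proof. by rewrite /Hb mul1r; case: (hG (x, b)) => _ []. Qed.
Lemma Hbb b t : Hb b b t = b.
Proof. by rewrite /Hb dxx mulr0; case: (hG (b, b)). Qed.

Lemma Hb_same b y t s : 0 <= t <= 1 -> 0 <= s <= 1 ->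
  d (Hb b y t) (Hb b y s) = `|t - s| * d y b.
Proof.
move=> ht hs; rewrite /Hb; have [_ [_ h]] := hG (y, b).
rewrite h /= ?in01 ?d0 //.
by rewrite -mulrBl normrM (ger0_norm (d0 _ _)).
Qed.

Lemma Hb_x b x t : 0 <= t <= 1 -> d (Hb b x t) x = t * d x b.
Proof.
move=> ht; have [h0 [_ h]] := hG (x, b); rewrite /= in h0 h.
rewrite /Hb -{3}h0 h; last (by rewrite lexx d0); last exact: in01 _ _ ht (d0 _ _).
rewrite subr0 ger0_norm //; have := in01 _ _ ht (d0 x b); lra.
Qed.

Lemma Hb_b b x t : 0 <= t <= 1 -> d (Hb b x t) b = (1 - t) * d x b.
Proof.
move=> ht; have [_ [h1 h]] := hG (x, b); rewrite /= in h1 h.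
rewrite /Hb -{3}h1 h; last (by rewrite lexx d0); last exact: in01 _ _ ht (d0 _ _).
rewrite ler0_norm; last by have := in01 _ _ ht (d0 x b); lra.
ring.
Qed.

Lemma Hb_t b x y t : 0 <= t <= 1 -> d (Hb b x t) (Hb b y t) <= d x y.
Proof.
move=> ht.
set m := Hb b x t; set m' := Hb b y t.
have := @core R (d m m' ^+ 2) (d m y ^+ 2) (d m' x ^+ 2) (d x y ^+ 2) t (d x b) (d y b).
move=> /(_ _) E.
have {}E : d m m' ^+ 2 = (1 - t) ^+ 2 * d x y ^+ 2.
  apply: E => c0 c1 c2 c3 c4 hc.
  have := @cnd5 R X d hd hpd m m' x y b c0 c1 c2 c3 c4 hc.
  by rewrite /m /m' !Hb_x // !Hb_b // (dsym m' x).
have := d0 m m'; have := d0 x y; move: ht => /andP [t0 t1]. nra.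
Qed.

Lemma Hb_bound b x y t s : 0 <= t <= 1 -> 0 <= s <= 1 ->
  d (Hb b x t) (Hb b y s) <= d x y + `|t - s| * d y b.
Proof.
move=> ht hs.
have := dtri (Hb b x t) (Hb b y t) (Hb b y s).
rewrite Hb_same //; have := Hb_t b x y t ht; lra.
Qed.

Lemma eps_bound (A tau B K e : R) : 0 < e -> 0 <= K -> 0 <= A -> 0 <= tau ->
  A < Num.min 1 (e / (K + 2)) -> tau < Num.min 1 (e / (K + 2)) ->
  B <= A + K -> A + tau * B < e.
Proof.
move=> e0 K0 A0 t0.
have hk : e / (K + 2) * (K + 2) = e by rewrite mulfVK // gt_eqF //; lra.
have ek : 0 < e / (K + 2) by apply: divr_gt0 => //; lra.
set m := Num.min 1 (e / (K + 2)).
have m1 : m <= 1 by rewrite /m ge_min lexx.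
have m2 : m <= e / (K + 2) by rewrite /m ge_min lexx orbT.
move: hk; set q := e / (K + 2) => hk hA ht hB.
have hB' : B <= 1 + K by lra.
have : tau * B <= tau * (1 + K) by apply: ler_wpM2l.
have : tau * (1 + K) < m * (1 + K) by rewrite ltr_pM2r //; lra.
have : m * (K + 2) <= q * (K + 2) by apply: ler_wpM2r => //; lra.
nra.
Qed.

End Geo.

Theorem mainTheorem6 (R : realType) (X : Type) (d : X -> X -> R)
  (hd : is_metric d) (hgeo : geodesic d) (hne : inhabited X)
  (hpd : forall lambda : R, 0 < lambda ->
     pos_def_kernel d (fun x y => expR (- (lambda * d x y ^+ 2)))) :
  contractible d /\ simply_connected d.
Proof.
have [G hG] := boolp.choice (fun (p : X * X) => hgeo p.1 p.2).
have HBB := @Hb_bound R X d hd hpd G hG.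
have HS := @Hb_same R X d hd G hG.
have H0 := @Hb0 R X d G hG. have H1 := @Hb1 R X d G hG.
have Hbb' := @Hbb R X d hd G hG.
have D0 := @d0 R X d hd. have Ds := @dsym R X d hd. have Dt := @dtri R X d hd.
have EB := @eps_bound R.
have pos : forall e K : R, 0 < e -> 0 <= K -> 0 < Num.min 1 (e / (K + 2)).
  move=> e K e0 K0; rewrite lt_min ltr01 /=; apply: divr_gt0 => //; lra.
split.
  case: hne => x0; exists x0, (Hb R X d G x0); split; last by split.
  move=> x t ht e e0.
  exists (Num.min 1 (e / (d x x0 + 2))); first exact: pos.
  move=> y s hs hxy hts.
  apply: le_lt_trans (HBB _ _ _ _ _ ht hs) _.
  apply: (EB _ _ _ (d x x0) _ e0 (D0 _ _) (D0 _ _) (normr_ge0 _)) => //.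
  by rewrite (Ds x y); apply: Dt.
split.
  move=> x y; exists (Hb R X d G y x); split; last by split.
  move=> t ht e e0.
  have dd : 0 < d x y + 1 by have := D0 x y; lra.
  exists (e / (d x y + 1)); first exact: divr_gt0.
  move=> s hs hts; rewrite HS //.
  have : `|t - s| * (d x y + 1) < e by rewrite -ltr_pdivlMr.
  have := normr_ge0 (t - s); have := D0 x y; nra.
move=> g hg hg01.
exists (fun s t => Hb R X d G (g 0) (g s) t).
split; last first.
  split; first by move=> s; apply: H0.
  split; first by move=> s; apply: H1.
  split; first by move=> t; apply: Hbb'.
  by move=> t; rewrite -hg01 Hbb'.
move=> s t hs ht e e0.
set K := d (g s) (g 0).
have [d1 d10 hd1] := hg s hs _ (pos e K e0 (D0 _ _)).
exists (Num.min d1 (Num.min 1 (e / (K + 2)))).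
  by rewrite lt_min d10 /=; exact: pos e K e0 (D0 _ _).
move=> s' t' hs' ht'; rewrite lt_min => /andP [h1 _]; rewrite lt_min => /andP [_ h5].
apply: le_lt_trans (HBB _ _ _ _ _ ht ht') _.
apply: (EB _ _ _ K _ e0 (D0 _ _) (D0 _ _) (normr_ge0 _)) => //.
- exact: hd1.
- by rewrite (Ds (g s) (g s')); apply: Dt.
Qed.
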